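(* Fix $x\in\mathbb{R}^d$. For every step $t$ and every two distinct centers $c',c''\in C_t$ with $\|c'-c''\|_2\ge D_t/2$, $$\Pr\big\{c'\notin C_{t+1}\text{ or } c''\notin C_{t+1}\mid\mathcal{T}_t\big\}\ge\frac{1}{128d}.$$
   Context: Centers $C=\{c^1,\dots,c^k\}\subset\mathbb{R}^d$, $\delta\in(0,1)$, $\varepsilon=\min\{\delta/(15\ln k),1/320\}$. A median of a finite nonempty $S\subset\mathbb{R}^d$ is a point $m$ such that for every coordinate $i$ each of $\{c\in S:c_i<m_i\}$, $\{c\in S:c_i>m_i\}$ has at most $|S|/2$ elements. Algorithm: $\mathcal{T}_1$ is a root (cell $\mathbb{R}^d$) with assigned centers $C$. For $t=1,2,\dots$, while some leaf has at least two assigned centers: sample independently $i_t$ uniform in $\{1,\dots,d\}$, $\theta_t$ uniform in $(0,1)$, $\sigma_t$ uniform in $\{\pm1\}$; to every leaf $u$ of $\mathcal{T}_t$ with $|C_u|\ge2$ apply Divide-and-Share with $(i,\theta,\sigma)=(i_t,\theta_t,\sigma_t)$, giving $\mathcal{T}_{t+1}$. Divide-and-Share on node $u$: $m^u$ a median of $C_u$, $R_u=\max_{c\in C_u}\|c-m^u\|_2$, $Left=\{c\in C_u:c_i\le m^u_i+(\sigma+\varepsilon)\sqrt\theta R_u\}$, $Right=\{c\in C_u:c_i\ge m^u_i+(\sigma-\varepsilon)\sqrt\theta R_u\}$; if both nonempty, $u$ is split into children $\{y\in u: y_i\le m^u_i+\sigma\sqrt\theta R_u\}$ with centers $Left$ and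 $\{y\in u: y_i> m^u_i+\sigma\sqrt\theta R_u\}$ with centers $Right$; otherwise $u$ is unchanged. For the fixed point $x$, $u_t$ denotes the leaf of $\mathcal{T}_t$ containing $x$, $C_t=C_{u_t}$, and $D_t=\max\{\|a-b\|_2:a,b\in C_t\}$. If the algorithm has stopped before step $s$, $\mathcal{T}_s$ denotes the final tree. *)

(* Defs.v *)
From HB Require Import structures.
From mathcomp Require Import all_boot all_order all_algebra.
From mathcomp Require Import all_classical all_reals all_analysis.
Set Implicit Arguments. Unset Strict Implicit. Unset Printing Implicit Defensive.
Import Order.TTheory GRing.Theory Num.Theory.
Local Open Scope ring_scope.
Local Open Scope classical_set_scope.

Section Defs.
Variables (R : realType) (d : nat).
Notation pt := 'rV[R]_d.

Definition dist2 (a b : pt) : R :=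
  Num.sqrt (\sum_(i < d) (a ord0 i - b ord0 i) ^+ 2).

Definition is_median (S : seq pt) (m : pt) : Prop :=
  forall i : 'I_d,
    (2 * count (fun c : pt => (c ord0 i < m ord0 i)%R) S <= size S)%N /\
    (2 * count (fun c : pt => (c ord0 i > m ord0 i)%R) S <= size S)%N.

Definition radius (S : seq pt) (m : pt) : R :=
  \big[Num.max/0]_(c <- S) dist2 c m.

Definition diam (S : seq pt) : R :=
  \big[Num.max/0]_(a <- S) \big[Num.max/0]_(b <- S) dist2 a b.

Definition eps_of (delta : R) (k : nat) : R :=
  Num.min (delta / (15 * ln (k%:R))) (1 / 320).

(* Divide-and-Share on a leaf with centers S, median m, radius Ru, applied with
   (i, theta, sigma); returns the centers of the resulting leaf containing x. *)
Definition next_centers (eps : R) (S : seq pt) (m : pt) (x : pt)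
    (i : 'I_d) (theta sigma : R) : seq pt :=
  let Ru := radius S m in
  let Lft := [seq c : pt <- S | c ord0 i <= m ord0 i + (sigma + eps) * Num.sqrt theta * Ru] in
  let Rgt := [seq c : pt <- S | c ord0 i >= m ord0 i + (sigma - eps) * Num.sqrt theta * Ru] in
  if (Lft != [::]) && (Rgt != [::]) then
    (if x ord0 i <= m ord0 i + sigma * Num.sqrt theta * Ru then Lft else Rgt)
  else S.

Definition sep_event (eps : R) (S : seq pt) (m x c1 c2 : pt) (i : 'I_d) (sigma : R)
  : set R :=
  [set theta : R | 0 < theta < 1 /\
     ((c1 \notin next_centers eps S m x i theta sigma) \/
      (c2 \notin next_centers eps S m x i theta sigma))].

(* Pr over i ~ Unif{1..d}, theta ~ Unif(0,1), sigma ~ Unif{+1,-1} (independent) *)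
Definition sep_prob (eps : R) (S : seq pt) (m x c1 c2 : pt) : \bar R :=
  (\sum_(i < d) \sum_(s : bool)
     ((1 / (2 * d%:R))%:E *
      (@lebesgue_measure R) (sep_event eps S m x c1 c2 i (if s then 1%R else (-1)%R))))%E.

End Defs.

(* Main.v *)
Require Import Defs.
From HB Require Import structures.
From mathcomp Require Import all_boot all_order all_algebra.
From mathcomp Require Import all_classical all_reals all_analysis.
From mathcomp Require Import ring lra zify.
Import Order.TTheory GRing.Theory Num.Theory.
Local Open Scope ring_scope.

Lemma real_ineq (R : realFieldType) (e k1 k2 u v : R) :
  0 <= e -> e <= 1/320 -> k1 * (1 + e) = 1 -> k2 * (1 - e) = 1 -> u <= v ->
  2/5 * (v - u) ^+ 2 - 5 * e * (u ^+ 2 + v ^+ 2) <=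
  Num.max 0 (Num.max 0 (v * k1) ^+ 2 - Num.max 0 (u * k2) ^+ 2) +
  Num.max 0 (Num.max 0 (- u * k1) ^+ 2 - Num.max 0 (- v * k2) ^+ 2).
Proof.
move=> e0 e1 hk1 hk2 uv.
have k1p : 0 < k1 by nra.
have k2p : 0 < k2 by nra.
have k1sq : 1 - 2 * e <= k1 ^+ 2 by nra.
have k2sq : k2 ^+ 2 <= 1 + 3 * e.
  have : k2 <= 1 + 2 * e by nra.
  nra.
have k1sq' : 4/5 <= k1 ^+ 2 by nra.
case: (lerP 0 u) => hu.
  rewrite (max_idPr (_ : 0 <= u * k2)); last by nra.
  rewrite (max_idPr (_ : 0 <= v * k1)); last by nra.
  rewrite (max_idPl (_ : - u * k1 <= 0)); last by nra.
  rewrite (max_idPl (_ : - v * k2 <= 0)); last by nra.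
  rewrite expr0n /= subrr maxxx addr0.
  rewrite le_max; apply/orP; right.
  nra.
case: (lerP v 0) => hv.
  rewrite (max_idPl (_ : u * k2 <= 0)); last by nra.
  rewrite (max_idPl (_ : v * k1 <= 0)); last by nra.
  rewrite (max_idPr (_ : 0 <= - u * k1)); last by nra.
  rewrite (max_idPr (_ : 0 <= - v * k2)); last by nra.
  rewrite expr0n /= subrr maxxx add0r.
  rewrite le_max; apply/orP; right.
  nra.
rewrite (max_idPl (_ : u * k2 <= 0)); last by nra.
rewrite (max_idPr (_ : 0 <= v * k1)); last by nra.
rewrite (max_idPr (_ : 0 <= - u * k1)); last by nra.
rewrite (max_idPl (_ : - v * k2 <= 0)); last by nra.
rewrite expr0n /= !subr0.
rewrite (max_idPr (_ : 0 <= (v * k1) ^+ 2)); last by apply: sqr_ge0.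
rewrite (max_idPr (_ : 0 <= (- u * k1) ^+ 2)); last by apply: sqr_ge0.
have -> : (v * k1) ^+ 2 + (- u * k1) ^+ 2 = (u ^+ 2 + v ^+ 2) * k1 ^+ 2 by ring.
have h1 : 0 <= u ^+ 2 + v ^+ 2 by rewrite addr_ge0 ?sqr_ge0.
have h2 : (v - u) ^+ 2 <= 2 * (u ^+ 2 + v ^+ 2) by have := sqr_ge0 (u + v); nra.
have h3 : 4/5 * (u ^+ 2 + v ^+ 2) <= (u ^+ 2 + v ^+ 2) * k1 ^+ 2 by nra.
nra.
Qed.

Section H.
Variables (R : realType) (d : nat).
Notation pt := 'rV[R]_d.

Lemma bigmax_ub (F : pt -> R) (s : seq pt) c : c \in s -> F c <= \big[Num.max/0]_(x <- s) F x.
Proof.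
elim: s => // a s IH; rewrite inE big_cons => /orP [/eqP ->|H].
  by rewrite le_max lexx.
by rewrite le_max (IH H) orbT.
Qed.

Lemma bigmax_P (P : R -> Prop) (F : pt -> R) (s : seq pt) : P 0 ->
  (forall c, c \in s -> P (F c)) -> P (\big[Num.max/0]_(x <- s) F x).
Proof.
move=> P0 HF; elim: s HF => [|a s IH] HF; first by rewrite big_nil.
rewrite big_cons /Num.max; case: ifP => _.
  by apply: IH => c Hc; apply: HF; rewrite inE Hc orbT.
by apply: HF; rewrite inE eqxx.
Qed.

Lemma dist2_sq (a b : pt) : dist2 a b ^+ 2 = \sum_(i < d) (a ord0 i - b ord0 i) ^+ 2.
Proof. by rewrite /dist2 sqr_sqrtr // sumr_ge0 // => i _; exact: sqr_ge0. Qed.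

Lemma dist2_ge0 (a b : pt) : 0 <= dist2 a b.
Proof. exact: sqrtr_ge0. Qed.

Lemma count_sum (P : pred pt) (F : pt -> R) w s :
  (forall a, P a -> w <= F a) -> (forall a, 0 <= F a) ->
  (count P s)%:R * w <= \sum_(a <- s) F a.
Proof.
move=> H1 H2; elim: s => [|a s IH]; first by rewrite big_nil mul0r.
rewrite big_cons /= natrD mulrDl; apply: lerD => //.
by case: (P a) / boolP => Pa /=; rewrite ?mul1r ?mul0r; [exact: H1|exact: H2].
Qed.

Lemma median_coord (S : seq pt) (m c : pt) (i : 'I_d) : is_median S m ->
  (size S)%:R * (c ord0 i - m ord0 i) ^+ 2 <= 2 * \sum_(a <- S) (c ord0 i - a ord0 i) ^+ 2.
Proof.
move=> /(_ i) [Hl Hg].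
have sq0 : forall a : pt, 0 <= (c ord0 i - a ord0 i) ^+ 2 by move=> a; exact: sqr_ge0.
case: (lerP (c ord0 i) (m ord0 i)) => hc.
  have Hc := count_sum (fun a : pt => (m ord0 i <= a ord0 i)%R) (fun a : pt => (c ord0 i - a ord0 i) ^+ 2)
     ((c ord0 i - m ord0 i) ^+ 2) S.
  have Hcnt : (size S <= 2 * count (fun a : pt => (m ord0 i <= a ord0 i)%R) S)%N.
    have := count_predC (fun a : pt => (m ord0 i <= a ord0 i)%R) S.
    have -> : count (predC (fun a : pt => (m ord0 i <= a ord0 i)%R)) S = count (fun c : pt => (c ord0 i < m ord0 i)%R) S.
      by apply: eq_count => a /=; rewrite -ltNge.
    lia.
  have Hcnt' : (size S)%:R <= 2 * (count (fun a : pt => (m ord0 i <= a ord0 i)%R) S)%:R :> R.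
    by rewrite -natrM ler_nat.
  have : (count (fun a : pt => (m ord0 i <= a ord0 i)%R) S)%:R * (c ord0 i - m ord0 i) ^+ 2 <= \sum_(a <- S) (c ord0 i - a ord0 i) ^+ 2.
    apply: Hc => // a /= ha. nra.
  have := sqr_ge0 (c ord0 i - m ord0 i). nra.
have Hc := count_sum (fun a : pt => (a ord0 i <= m ord0 i)%R) (fun a : pt => (c ord0 i - a ord0 i) ^+ 2)
     ((c ord0 i - m ord0 i) ^+ 2) S.
have Hcnt : (size S <= 2 * count (fun a : pt => (a ord0 i <= m ord0 i)%R) S)%N.
  have := count_predC (fun a : pt => (a ord0 i <= m ord0 i)%R) S.
  have -> : count (predC (fun a : pt => (a ord0 i <= m ord0 i)%R)) S = count (fun c : pt => (c ord0 i > m ord0 i)%R) S.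
    by apply: eq_count => a /=; rewrite -ltNge.
  lia.
have Hcnt' : (size S)%:R <= 2 * (count (fun a : pt => (a ord0 i <= m ord0 i)%R) S)%:R :> R.
  by rewrite -natrM ler_nat.
have : (count (fun a : pt => (a ord0 i <= m ord0 i)%R) S)%:R * (c ord0 i - m ord0 i) ^+ 2 <= \sum_(a <- S) (c ord0 i - a ord0 i) ^+ 2.
  apply: Hc => // a /= ha. nra.
have := sqr_ge0 (c ord0 i - m ord0 i). nra.
Qed.


Lemma median_dist (S : seq pt) (m c : pt) : is_median S m ->
  (size S)%:R * dist2 c m ^+ 2 <= 2 * \sum_(a <- S) dist2 c a ^+ 2.
Proof.
move=> Hm; rewrite dist2_sq.
under [X in _ <= 2 * X]eq_bigr do rewrite dist2_sq.
rewrite (exchange_big) /= mulr_sumr mulr_sumr; apply: ler_sum => i _.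
exact: median_coord.
Qed.

Lemma sum_le_const (s : seq pt) (F : pt -> R) w : (forall a, a \in s -> F a <= w) ->
  \sum_(a <- s) F a <= (size s)%:R * w.
Proof.
elim: s => [|a s IH] H; first by rewrite big_nil mul0r.
rewrite big_cons /= -natr1 mulrDl mul1r addrC; apply: lerD.
  by apply: IH => b hb; apply: H; rewrite inE hb orbT.
by apply: H; rewrite inE eqxx.
Qed.

Lemma diam_ub (S : seq pt) a b : a \in S -> b \in S -> dist2 a b <= diam S.
Proof.
move=> ha hb; rewrite /diam.
apply: (@le_trans _ _ (\big[Num.max/0]_(b0 <- S) dist2 a b0)).
  exact: bigmax_ub.
exact: (bigmax_ub (fun a => \big[Num.max/0]_(b <- S) dist2 a b) S a ha).
Qed.

Lemma radius_bound (S : seq pt) (m c : pt) : is_median S m -> c \in S ->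
  dist2 c m ^+ 2 <= 2 * diam S ^+ 2.
Proof.
move=> Hm hc.
have H1 := median_dist S m c Hm.
have H2 : \sum_(a <- S) dist2 c a ^+ 2 <= (size S)%:R * diam S ^+ 2.
  apply: sum_le_const => a ha; have h1 := dist2_ge0 c a; have h2 := diam_ub S c a hc ha; nra.
have hs : 0 < (size S)%:R :> R.
  by rewrite ltr0n; case: S hc {H1 H2 Hm}.
have := sqr_ge0 (dist2 c m). have := sqr_ge0 (diam S). nra.
Qed.

Lemma radius_ge0 (S : seq pt) m : 0 <= Defs.radius S m.
Proof. by apply: (bigmax_P (fun r => 0 <= r)) => // c _; exact: dist2_ge0. Qed.

Lemma sep_key eps (S : seq pt) (m x : pt) (i : 'I_d) theta sigma (p q : pt) :
 0 <= eps -> p \in S -> q \in S ->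
 p ord0 i < m ord0 i + (sigma - eps) * Num.sqrt theta * Defs.radius S m ->
 m ord0 i + (sigma + eps) * Num.sqrt theta * Defs.radius S m < q ord0 i ->
 p \notin next_centers eps S m x i theta sigma \/ q \notin next_centers eps S m x i theta sigma.
Proof.
move=> he hp hq Hp Hq.
have h0 : 0 <= eps * Num.sqrt theta * Defs.radius S m.
  by rewrite mulr_ge0 ?mulr_ge0 ?sqrtr_ge0 ?radius_ge0.
rewrite /next_centers.
set Ru := Defs.radius S m in h0 Hp Hq *.
set s := Num.sqrt theta in h0 Hp Hq *.
set L := [seq c <- S | _].
set Rg := [seq c <- S | _].
have pL : p \in L by rewrite mem_filter hp andbT; nra.
have qR : q \in Rg by rewrite mem_filter hq andbT; nra.
have -> : (L != [::]) && (Rg != [::]).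
  by apply/andP; split; apply/eqP => E; [rewrite E in pL | rewrite E in qR].
case: ifP => _.
  by right; rewrite mem_filter negb_and -ltNge Hq.
by left; rewrite mem_filter negb_and -ltNge Hp.
Qed.


Lemma lm_mono (A B : set R) : (A `<=` B)%classic -> (lebesgue_measure A <= lebesgue_measure B)%E.
Proof. move=> AB. rewrite /lebesgue_measure /lebesgue_stieltjes_measure /measure_extension.
exact: le_outer_measure. Qed.

Lemma lm_itv (a b : R) : a <= b -> lebesgue_measure (`]a, b[%classic : set R) = (b - a)%:E.
Proof. move=> ab. rewrite lebesgue_measure_itv /=. rewrite lte_fin.
case: ltP => h. by rewrite EFinB.
have -> : b = a by apply/eqP; rewrite eq_le ab h.
by rewrite subrr.
Qed.

Lemma ev_measure (eps : R) (S : seq pt) (m x c1 c2 : pt) (i : 'I_d) (sigma a b : R) :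
  0 < Defs.radius S m -> 0 <= a -> 0 <= b -> b <= Defs.radius S m ->
  (forall th, 0 < th < 1 -> a < Num.sqrt th * Defs.radius S m < b ->
     c1 \notin next_centers eps S m x i th sigma \/ c2 \notin next_centers eps S m x i th sigma) ->
  ((Num.max 0 (b ^+ 2 - a ^+ 2) / Defs.radius S m ^+ 2)%:E <=
     lebesgue_measure (sep_event eps S m x c1 c2 i sigma))%E.
Proof.
set Ru := Defs.radius S m => Rp a0 b0 bR H.
case: (ltP a b) => hab; last first.
  rewrite (max_idPl (_ : b ^+ 2 - a ^+ 2 <= 0)); last by nra.
  by rewrite mul0r; apply: measure_ge0.
rewrite (max_idPr (_ : 0 <= b ^+ 2 - a ^+ 2)); last by nra.
have aR : 0 <= a / Ru by rewrite divr_ge0 // ltW.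
have bR' : b / Ru <= 1 by rewrite ler_pdivrMr // mul1r.
have bR0 : 0 <= b / Ru by rewrite divr_ge0 // ltW.
have ab' : a / Ru < b / Ru by rewrite ltr_pM2r // invr_gt0.
have -> : (b ^+ 2 - a ^+ 2) / Ru ^+ 2 = (b / Ru) ^+ 2 - (a / Ru) ^+ 2.
  by rewrite !expr_div_n mulrBl.
rewrite -lm_itv; last by nra.
apply: lm_mono => th /=; rewrite in_itv /= => /andP [h1 h2].
split.
  apply/andP; split; first by have := sqr_ge0 (a / Ru); lra.
  by apply: (lt_le_trans h2); nra.
have thp : 0 < th by have := sqr_ge0 (a / Ru); lra.
apply: H.
  apply/andP; split => //; apply: (lt_le_trans h2); nra.
have s1 : a / Ru < Num.sqrt th.
  by rewrite -(ger0_norm aR) -sqrtr_sqr ltr_sqrt.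
have s2 : Num.sqrt th < b / Ru.
  by rewrite -(ger0_norm bR0) -sqrtr_sqr ltr_sqrt // exprn_gt0 // (le_lt_trans aR ab').
apply/andP; split.
  by rewrite -ltr_pdivrMr.
by rewrite -ltr_pdivlMr.
Qed.

Lemma coord_le (a b : pt) (i : 'I_d) : (a ord0 i - b ord0 i) ^+ 2 <= dist2 a b ^+ 2.
Proof.
rewrite dist2_sq (bigD1 i) //= lerDl; apply: sumr_ge0 => j _; exact: sqr_ge0.
Qed.

Definition Wf (e Ru lo hi : R) (s : bool) : R :=
  let k1 := (1 + e)^-1 in let k2 := (1 - e)^-1 in
  if s then Num.max 0 (Num.max 0 (hi * k1) ^+ 2 - Num.max 0 (lo * k2) ^+ 2) / Ru ^+ 2
  else Num.max 0 (Num.max 0 (- lo * k1) ^+ 2 - Num.max 0 (- hi * k2) ^+ 2) / Ru ^+ 2.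

Lemma ev_bound (e : R) (S : seq pt) (m x c1 c2 p q : pt) (i : 'I_d) (s : bool) :
  0 <= e -> e <= 1/320 -> 0 < Defs.radius S m -> p \in S -> q \in S ->
  p ord0 i - m ord0 i <= q ord0 i - m ord0 i ->
  `|p ord0 i - m ord0 i| <= Defs.radius S m -> `|q ord0 i - m ord0 i| <= Defs.radius S m ->
  (forall th sigma, p \notin next_centers e S m x i th sigma \/ q \notin next_centers e S m x i th sigma ->
     c1 \notin next_centers e S m x i th sigma \/ c2 \notin next_centers e S m x i th sigma) ->
  ((Wf e (Defs.radius S m) (p ord0 i - m ord0 i) (q ord0 i - m ord0 i) s)%:E <=
     lebesgue_measure (sep_event e S m x c1 c2 i (if s then 1%R else (-1)%R)))%E.
Proof.
set Ru := Defs.radius S m.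
move=> e0 e1 Rp hp hq uv hu hv Hsw.
set k1 := (1 + e)^-1; set k2 := (1 - e)^-1.
have hk1 : k1 * (1 + e) = 1 by rewrite mulVf //; apply/eqP; lra.
have hk2 : k2 * (1 - e) = 1 by rewrite mulVf //; apply/eqP; lra.
have k1p : 0 < k1 by nra.
have k2p : 0 < k2 by nra.
have k1le : k1 <= 1 by nra.
move: hu hv; rewrite !ler_norml => /andP [hu1 hu2] /andP [hv1 hv2].
case: s; rewrite /Wf -/k1 -/k2.
- apply: ev_measure => //.
  + by rewrite le_max lexx.
  + by rewrite le_max lexx.
  + rewrite ge_max (ltW Rp) /= -/Ru; nra.
  move=> th /andP [th0 th1]; rewrite -/Ru => /andP [ha hb].
  have sp : 0 < Num.sqrt th * Ru by rewrite mulr_gt0 // sqrtr_gt0.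
  apply: Hsw; apply: sep_key => //; rewrite -!mulrA -/Ru.
  + move: ha; rewrite gt_max => /andP [_ ha]; nra.
  + move: hb; rewrite lt_max => /orP [] hb; nra.
- apply: ev_measure => //.
  + by rewrite le_max lexx.
  + by rewrite le_max lexx.
  + rewrite ge_max (ltW Rp) /= -/Ru; nra.
  move=> th /andP [th0 th1]; rewrite -/Ru => /andP [ha hb].
  have sp : 0 < Num.sqrt th * Ru by rewrite mulr_gt0 // sqrtr_gt0.
  apply: Hsw; apply: sep_key => //; rewrite -!mulrA -/Ru.
  + move: hb; rewrite lt_max => /orP [] hb; nra.
  + move: ha; rewrite gt_max => /andP [_ ha]; nra.
Qed.

End H.

Theorem lemma3 (R : realType) (d k : nat) (delta : R)
    (S : seq 'rV[R]_d) (m x c1 c2 : 'rV[R]_d) :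
  (0 < d)%N -> 0 < delta < 1 ->
  uniq S -> (size S <= k)%N ->
  is_median S m ->
  c1 \in S -> c2 \in S -> c1 != c2 ->
  diam S / 2 <= dist2 c1 c2 ->
  ((1 / (128 * d%:R))%:E <= sep_prob (eps_of delta k) S m x c1 c2)%E.
Proof.
move=> d0 /andP [dl0 dl1] Su Sk Hm h1 h2 h12 HD.
set e := eps_of delta k.
have kge1 : (1 <= k)%N by apply: leq_trans Sk; case: (S) h1.
have e0 : 0 <= e.
  rewrite /e /eps_of le_min; apply/andP; split; last by [].
  apply: divr_ge0; first exact: ltW.
  by apply: mulr_ge0 => //; apply: ln_ge0; rewrite ler1n.
have e1 : e <= 1 / 320 by rewrite /e /eps_of ge_min lexx orbT.
set Ru := Defs.radius S m.
have D0 : 0 <= diam S by have := diam_ub _ _ _ _ _ h1 h2; have := dist2_ge0 _ _ c1 c2; lra.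
have [Ru0 Ru2] : 0 <= Ru /\ Ru ^+ 2 <= 2 * diam S ^+ 2.
  apply: (bigmax_P _ _ (fun r => 0 <= r /\ r ^+ 2 <= 2 * diam S ^+ 2)).
    by split => //; rewrite expr0n /= mulr_ge0 // sqr_ge0.
  move=> c hc; split; first exact: dist2_ge0.
  exact: radius_bound.
have R8 : Ru ^+ 2 <= 8 * dist2 c1 c2 ^+ 2 by nra.
have d1R : dist2 c1 m <= Ru by exact: (bigmax_ub _ _ (fun c => dist2 c m) S c1 h1).
have d2R : dist2 c2 m <= Ru by exact: (bigmax_ub _ _ (fun c => dist2 c m) S c2 h2).
have cb : forall c, dist2 c m <= Ru -> forall i : 'I_d, `|c ord0 i - m ord0 i| <= Ru.
  move=> c hc i; have := coord_le _ _ c m i; have := dist2_ge0 _ _ c m.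
  rewrite ler_norml => ? ?; apply/andP; split; nra.
have Rp : 0 < Ru.
  rewrite lt_neqAle Ru0 andbT; apply/eqP => R0.
  move/eqP: h12; apply; apply/rowP => j.
  have := cb _ d1R j; have := cb _ d2R j; rewrite -R0 !ler_norml => /andP [? ?] /andP [? ?].
  by apply/eqP; rewrite eq_le; apply/andP; split; lra.
pose W (i : 'I_d) (s : bool) :=
  if c1 ord0 i - m ord0 i <= c2 ord0 i - m ord0 i
  then @Wf R e Ru (c1 ord0 i - m ord0 i) (c2 ord0 i - m ord0 i) s
  else @Wf R e Ru (c2 ord0 i - m ord0 i) (c1 ord0 i - m ord0 i) s.
rewrite /sep_prob -/e.
apply: (@le_trans _ _ ((\sum_(i < d) \sum_(s : bool) (1 / (2 * d%:R) * W i s))%:E)).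
  rewrite lee_fin.
  have hk1 : (1 + e)^-1 * (1 + e) = 1 by rewrite mulVf //; apply/eqP; lra.
  have hk2 : (1 - e)^-1 * (1 - e) = 1 by rewrite mulVf //; apply/eqP; lra.
  have HG : forall i, (2/5 * (c1 ord0 i - c2 ord0 i) ^+ 2 - 5 * e * ((c1 ord0 i - m ord0 i) ^+ 2 + (c2 ord0 i - m ord0 i) ^+ 2)) / Ru ^+ 2 <= W i true + W i false.
    move=> i; rewrite /W; case: ifP => huv; rewrite /Wf -mulrDl; (apply: ler_wpM2r; first by rewrite invr_ge0 sqr_ge0).
      apply: le_trans (real_ineq _ _ _ _ _ _ e0 e1 hk1 hk2 huv).
      by rewrite le_eqVlt; apply/orP; left; apply/eqP; ring.
    have huv' : c2 ord0 i - m ord0 i <= c1 ord0 i - m ord0 i by apply: ltW; rewrite ltNge huv.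
    apply: le_trans (real_ineq _ _ _ _ _ _ e0 e1 hk1 hk2 huv').
    by rewrite le_eqVlt; apply/orP; left; apply/eqP; ring.
  apply: (@le_trans _ _ (\sum_(i < d) 1 / (2 * d%:R) * ((2/5 * (c1 ord0 i - c2 ord0 i) ^+ 2 - 5 * e * ((c1 ord0 i - m ord0 i) ^+ 2 + (c2 ord0 i - m ord0 i) ^+ 2)) / Ru ^+ 2))); last first.
    apply: ler_sum => i _; rewrite big_bool /= -mulrDr; apply: ler_wpM2l; last exact: HG.
    by rewrite divr_ge0 // mulr_ge0.
  rewrite -mulr_sumr -mulr_suml sumrB -!mulr_sumr big_split /= -!dist2_sq.
  have Q : 3/160 <= (2 / 5 * dist2 c1 c2 ^+ 2 - 5 * e * (dist2 c1 m ^+ 2 + dist2 c2 m ^+ 2)) / Ru ^+ 2.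
    rewrite ler_pdivlMr ?exprn_gt0 //.
    have g1 := dist2_ge0 _ _ c1 m; have g2 := dist2_ge0 _ _ c2 m.
    have g3 : dist2 c1 m ^+ 2 <= Ru ^+ 2 by nra.
    have g4 : dist2 c2 m ^+ 2 <= Ru ^+ 2 by nra.
    nra.
  have tp : 0 < d%:R :> R by rewrite ltr0n.
  have -> : 1 / (128 * d%:R) = (d%:R)^-1 * (1/128) :> R by field; apply/eqP; lra.
  have -> : 1 / (2 * d%:R) = (d%:R)^-1 * (1/2) :> R by field; apply/eqP; lra.
  have tip : 0 < (d%:R : R)^-1 by rewrite invr_gt0.
  nra.
rewrite -sumEFin; apply: lee_sum => i _; rewrite -sumEFin; apply: lee_sum => s _.
rewrite EFinM; apply: lee_wpmul2l.
  by rewrite lee_fin divr_ge0 // mulr_ge0.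
rewrite /W; case: ifP => huv.
  apply: ev_bound => //; exact: cb.
apply: ev_bound => //.
- by apply: ltW; rewrite ltNge huv.
- exact: cb.
- exact: cb.
by move=> th sigma [H|H]; [right|left].
Qed.
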